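(* Let $\mathcal{M}$ be a $W^*$-algebra, $E\subset\mathcal{L}(\mathcal{M})$ a semilattice of projections, and define $\mathcal{S}:=\bigcup_{p\in E}Z(p\mathcal{M}p)\cap\mathcal{U}(\mathcal{M})$, where $Z(p\mathcal{M}p)$ is the center of $p\mathcal{M}p$. If $\mathcal{S}\subset\mathcal{U}(E)$, then $\mathcal{S}$ is an inverse semigroup (under multiplication in $\mathcal{M}$), and moreover $\mathcal{S}$ is a Clifford inverse semigroup.
   Context: $\mathcal{L}(\mathcal{M})$ is the set of orthogonal projections of $\mathcal{M}$, $\mathcal{U}(\mathcal{M})$ the set of partial isometries. A semilattice of projections is a subset $E\subset\mathcal{L}(\mathcal{M})$ of pairwise commuting projections closed under multiplication. $\mathcal{U}(E):=\{u\in\mathcal{U}(\mathcal{M}): u^*u\in E,\ uu^*\in E\}$. An inverse semigroup is a semigroup in which each $s$ has a unique $t$ with $sts=s$, $tst=t$; it is Clifford if its idempotents are central (commute with all its elements). *)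

(* Defs.v *)
From HB Require Import structures.
From mathcomp Require Import all_boot all_order all_algebra.
From mathcomp Require Import complex.
From mathcomp Require Import all_classical all_reals all_analysis.
Set Implicit Arguments. Unset Strict Implicit. Unset Printing Implicit Defensive.
Import Order.TTheory GRing.Theory Num.Theory ComplexField.
Import numFieldNormedType.Exports numFieldTopology.Exports.
Local Open Scope ring_scope.
Local Open Scope classical_set_scope.

(* A W*-algebra is a C*-algebra (complete normed complex *-algebra    *)
(* with unit, submultiplicative norm and the C*-identity) which, as a  *)
(* Banach space, is (isometrically, linearly) the dual of some normed  *)
(* space X (its predual).                                              *)

Record WstarAlgebra (R : realType) := {
  wcar :> completeNormedModType R[i];
  wmul : wcar -> wcar -> wcar;
  wone : wcar;
  wstar : wcar -> wcar;
  wmulA : forall x y z, wmul x (wmul y z) = wmul (wmul x y) z;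
  wmul1l : forall x, wmul wone x = x;
  wmul1r : forall x, wmul x wone = x;
  wmulDl : forall x y z, wmul (x + y) z = wmul x z + wmul y z;
  wmulDr : forall x y z, wmul x (y + z) = wmul x y + wmul x z;
  wmulZl : forall (a : R[i]) x y, wmul (a *: x) y = a *: wmul x y;
  wmulZr : forall (a : R[i]) x y, wmul x (a *: y) = a *: wmul x y;
  wstarK : forall x, wstar (wstar x) = x;
  wstarD : forall x y, wstar (x + y) = wstar x + wstar y;
  wstarZ : forall (a : R[i]) x, wstar (a *: x) = (a^*)%C *: wstar x;
  wstarM : forall x y, wstar (wmul x y) = wmul (wstar y) (wstar x);
  wnormM : forall x y, `|wmul x y| <= `|x| * `|y|;
  wnormC : forall x, `|wmul (wstar x) x| = `|x| ^+ 2;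
  wpredual : exists (X : normedModType R[i]) (phi : wcar -> X -> R[i]^o),
    [/\ (forall v (a : R[i]) (x y : X), phi v (a *: x + y) = a * phi v x + phi v y)
        /\ (forall v, continuous (phi v)),
        (forall (a : R[i]) v w (x : X), phi (a *: v + w) x = a * phi v x + phi w x),
        (forall f : X -> R[i]^o,
           (forall (a : R[i]) (x y : X), f (a *: x + y) = a * f x + f y) ->
           continuous f -> exists v, phi v = f),
        (forall v (x : X), `|phi v x| <= `|v| * `|x|) &
        (forall v (e : R[i]), 0 < e ->
           exists x : X, `|x| <= 1 /\ `|v| - e < `|phi v x|)]
}.

Section Notions.
Variables (R : realType) (M : WstarAlgebra R).
Local Notation mul := (@wmul R M).
Local Notation star := (@wstar R M).

Definition is_proj (p : M) : Prop := star p = p /\ mul p p = p.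

Definition is_partial_isometry (u : M) : Prop := is_proj (mul (star u) u).

Definition proj_semilattice (E : set M) : Prop :=
  [/\ (forall p, E p -> is_proj p),
      (forall p q, E p -> E q -> mul p q = mul q p) &
      (forall p q, E p -> E q -> E (mul p q))].

Definition UE (E : set M) : set M :=
  [set u | is_partial_isometry u /\ E (mul (star u) u) /\ E (mul u (star u))].

Definition corner (p : M) : set M := [set mul (mul p x) p | x in setT].
Definition corner_center (p : M) : set M :=
  [set z | corner p z /\ forall y, corner p y -> mul z y = mul y z].

Definition Sset (E : set M) : set M :=
  [set u | exists2 p, E p & corner_center p u /\ is_partial_isometry u].

End Notions.

Definition is_subsemigroup (T : Type) (op : T -> T -> T) (S : set T) : Prop :=
  (forall s t, S s -> S t -> S (op s t)) /\
  (forall s t u, S s -> S t -> S u -> op s (op t u) = op (op s t) u).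

Definition is_inverse_semigroup (T : Type) (op : T -> T -> T) (S : set T) : Prop :=
  is_subsemigroup op S /\
  (forall s, S s -> exists! t, S t /\ op (op s t) s = s /\ op (op t s) t = t).

Definition is_clifford_inverse_semigroup (T : Type) (op : T -> T -> T) (S : set T)
  : Prop :=
  is_inverse_semigroup op S /\
  (forall e s, S e -> op e e = e -> S s -> op e s = op s e).

(* Main.v *)
Require Import Defs.
From HB Require Import structures.
From mathcomp Require Import all_boot all_order all_algebra.
From mathcomp Require Import complex.
From mathcomp Require Import all_classical all_reals all_analysis.
Local Open Scope classical_set_scope.

Set Implicit Arguments. Unset Strict Implicit.
Section Helpers.
Import GRing.Theory Num.Theory.
Local Open Scope ring_scope.
Variables (R : realType) (M : WstarAlgebra R).
Local Notation mul := (@wmul R M).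
Local Notation st := (@wstar R M).

Lemma wst0 : st 0 = 0.
Proof.
have h := @wstarD R M 0 0. rewrite addr0 in h.
by move: h; set a := (X in X = _) => h; apply: (addrI a); rewrite addr0 -h.
Qed.

Lemma wstN (x : M) : st (- x) = - st x.
Proof.
apply/eqP; rewrite -subr_eq0 opprK -wstarD addNr wst0 //.
Qed.

Lemma wmul0l (x : M) : mul 0 x = 0.
Proof.
have h := wmulDl 0 0 x. rewrite addr0 in h.
by move: h; set a := (X in X = _) => h; apply: (addrI a); rewrite addr0 -h.
Qed.

Lemma wmul0r (x : M) : mul x 0 = 0.
Proof.
have h := wmulDr x 0 0. rewrite addr0 in h.
by move: h; set a := (X in X = _) => h; apply: (addrI a); rewrite addr0 -h.
Qed.

Lemma wmulNl (x y : M) : mul (- x) y = - mul x y.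
Proof. by apply/eqP; rewrite -subr_eq0 opprK -wmulDl addNr wmul0l. Qed.

Lemma wmulNr (x y : M) : mul x (- y) = - mul x y.
Proof. by apply/eqP; rewrite -subr_eq0 opprK -wmulDr addNr wmul0r. Qed.

Lemma cstar_zero (x : M) : mul (st x) x = 0 -> x = 0.
Proof.
move=> h; have := wnormC x; rewrite h normr0 => /esym/eqP.
by rewrite sqrf_eq0 => /eqP /normr0_eq0.
Qed.

Lemma pi_uuu (u : M) : is_partial_isometry u -> mul u (mul (st u) u) = u.
Proof.
move=> [He Hee]; set e := mul (st u) u in He Hee *.
apply/eqP; rewrite -subr_eq0; apply/eqP/cstar_zero.
rewrite wstarD wstN wstarM He.
rewrite !wmulDl !wmulDr !wmulNl !wmulNr !wmulA -/e.
idtac.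
rewrite -!(wmulA e (st u) u) -/e !Hee -!(wmulA e (st u) u) -/e !Hee. by rewrite !subrr addr0.
Qed.

Lemma cornerE (p y : M) : is_proj p -> (corner p y <-> mul (mul p y) p = y).
Proof.
move=> [Ps Pp]; split.
  by case=> x _ <-; rewrite !wmulA Pp -wmulA Pp.
by move=> h; exists y.
Qed.

Lemma corner_l (p y : M) : is_proj p -> corner p y -> mul p y = y /\ mul y p = y.
Proof.
move=> [Ps Pp] [x _ <-]; split; first by rewrite wmulA wmulA Pp.
by rewrite -wmulA Pp.
Qed.

Lemma corner_st (p y : M) : is_proj p -> corner p y -> corner p (st y).
Proof.
move=> [Ps Pp] [x _ <-]; exists (st x) => //.
by rewrite !wstarM Ps wmulA.
Qed.

Lemma cc_st (p u : M) : is_proj p -> corner_center p u -> corner_center p (st u).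
Proof.
move=> Pp [Cu Zu]; split; first exact: corner_st.
move=> y Cy; have := Zu _ (corner_st Pp Cy).
move/(congr1 st); rewrite !wstarM !wstarK; by move->.
Qed.

Lemma cc_normal (p u : M) : is_proj p -> corner_center p u -> mul (st u) u = mul u (st u).
Proof.
move=> Pp [Cu Zu]; symmetry; apply: Zu; exact: corner_st.
Qed.

Lemma cc_commE (E : set M) (p u e : M) : proj_semilattice E -> E p -> E e ->
  corner_center p u -> mul u e = mul e u.
Proof.
move=> [HP HC HM] Ep Ee [Cu Zu].
have Pp := HP _ Ep; have [Pus Pup] := Pp.
have [lu ru] := corner_l Pp Cu.
have Cpe : corner p (mul p e).
  apply/(cornerE _ Pp); by rewrite -!wmulA (HC _ _ Ee Ep) !wmulA !Pup.
have := Zu _ Cpe.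
by rewrite wmulA ru (HC _ _ Ep Ee) -wmulA lu.
Qed.

End Helpers.

Theorem proposition3p5 (R : realType) (M : WstarAlgebra R) (E : set M) :
  proj_semilattice E ->
  Sset E `<=` UE E ->
  is_inverse_semigroup (@wmul R M) (Sset E) /\
  is_clifford_inverse_semigroup (@wmul R M) (Sset E).
Proof.
move=> HE HS; have [HP HC HM] := HE.
pose mul := @wmul R M; pose st := @wstar R M.
have clos : forall s t, Sset E s -> Sset E t -> Sset E (wmul s t).
  move=> u v Su Sv.
  have [_ [Eu1 Eu2]] := HS _ Su.
  have [_ [Ev1 Ev2]] := HS _ Sv.
  case: Su => p Ep [[Cu Zu] PIu]; case: Sv => q Eq [[Cv Zv] PIv].
  have Pp := HP _ Ep; have Pq := HP _ Eq.
  have [lu ru] := corner_l Pp Cu; have [lv rv] := corner_l Pq Cv.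
  have uq := cc_commE HE Ep Eq (conj Cu Zu).
  have vp := cc_commE HE Eq Ep (conj Cv Zv).
  have Ppq := HP _ (HM _ _ Ep Eq).
  exists (wmul p q); first exact: HM.
  split; first split.
  - apply/(cornerE _ Ppq).
    rewrite -(wmulA p q) (wmulA q u v) -uq -(wmulA u q v) lv (wmulA p u v) lu.
    by rewrite -(wmulA u v) (wmulA v p q) vp -(wmulA p v q) rv wmulA ru.
  - move=> y /(cornerE _ Ppq) Cy.
    have [Pps Ppp] := Pp; have [Pqs Pqq] := Pq.
    set a := wmul p q in Cy.
    have pa : wmul p a = a by rewrite /a wmulA Ppp.
    have ap : wmul a p = a by rewrite /a -wmulA (HC _ _ Eq Ep) wmulA Ppp.
    have qa : wmul q a = a by rewrite /a (HC _ _ Ep Eq) wmulA Pqq.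
    have aq : wmul a q = a by rewrite /a -wmulA Pqq.
    have Cpy : corner p y.
      apply/(cornerE _ Pp); rewrite -Cy (wmulA p (wmul a y) a) (wmulA p a y) pa.
      by rewrite -(wmulA (wmul a y) a p) ap.
    have Cqy : corner q y.
      apply/(cornerE _ Pq); rewrite -Cy (wmulA q (wmul a y) a) (wmulA q a y) qa.
      by rewrite -(wmulA (wmul a y) a q) aq.
    by rewrite -wmulA (Zv _ Cqy) wmulA (Zu _ Cpy) wmulA.
  - have ve := cc_commE HE Eq Eu1 (conj Cv Zv).
    rewrite /is_partial_isometry wstarM -wmulA (wmulA (wstar u) u v) -ve.
    rewrite wmulA; apply: HP; exact: HM.
have invS : forall u, Sset E u ->
    [/\ Sset E (wstar u), wmul (wmul u (wstar u)) u = u &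
        wmul (wmul (wstar u) u) (wstar u) = wstar u].
  move=> u Su; have [PIu _] := HS _ Su.
  have uuu := pi_uuu PIu.
  case: Su => p Ep [Zu _]; have Pp := HP _ Ep.
  have nu := cc_normal Pp Zu.
  split.
  - exists p => //; split; first exact: cc_st.
    by rewrite /is_partial_isometry wstarK -nu.
  - by rewrite -wmulA.
  - have := congr1 (@wstar R M) uuu.
    by rewrite !wstarM wstarK.
have cliff : forall e s, Sset E e -> wmul e e = e -> Sset E s -> wmul e s = wmul s e.
  move=> e s Se ee Ss.
  have [PIe [Ee1 _]] := HS _ Se.
  have uuu := pi_uuu PIe.
  have Eee : E e.
    case: Se => r Er [Ze _].
    have ne := cc_normal (HP _ Er) Ze.
    suff -> : e = wmul (wstar e) e by [].
    by rewrite ne -{1}uuu ne wmulA ee.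
  case: Ss => p Ep [Zs _].
  by rewrite (cc_commE HE Ep Eee Zs).
have isg : is_subsemigroup (@wmul R M) (Sset E).
  by split => // s t u _ _ _; rewrite wmulA.
have iis : is_inverse_semigroup (@wmul R M) (Sset E).
  split => // u Su.
  have [Sst uuu tut] := invS _ Su.
  exists (wstar u); split; first by split.
  move=> w [Sw [uwu wuw]].
  set t := wstar u in Sst uuu tut *.
  have Stu := clos _ _ Sst Su. have Swu := clos _ _ Sw Su.
  have Sut := clos _ _ Su Sst. have Suw := clos _ _ Su Sw.
  have h1 : wmul t u = wmul (wmul t u) (wmul w u).
    by rewrite wmulA -(wmulA t u w) -(wmulA t _ u) uwu.
  have tu_id : wmul (wmul t u) (wmul t u) = wmul t u by rewrite wmulA tut.
  have ut_id : wmul (wmul u t) (wmul u t) = wmul u t by rewrite wmulA uuu.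
  have h2 : wmul u w = wmul (wmul u t) (wmul u w).
    by rewrite wmulA uuu.
  have e1 : t = wmul (wmul w u) t.
    rewrite -{1}tut h1 (cliff _ _ Stu tu_id Swu) -wmulA.
    by rewrite tut.
  have e2 : w = wmul (wmul w u) t.
    rewrite -{1}wuw -(wmulA w u w) h2 (cliff _ _ Sut ut_id Suw).
    by rewrite wmulA (wmulA w u w) wuw wmulA.
  by rewrite e1 -e2.
split=> //; split=> //.
Qed.
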